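(* Let $I$ be a BPPS instance with $d$ scenarios in which every item has size $s_i\ge\varepsilon^2$, and let $\mathcal{P}^0=\{\{i\}: i\in\bigcup_{t\in\mathcal{T}}G_t^0\}$ be the packing placing each item of the groups $G_t^0$ in its own bin. Then $\mathrm{val}_{BPPS}(\mathcal{P}^0)\le\varepsilon\,\mathrm{OPT}(I)+2^d$.
   Context: A BPPS instance has $d$ scenarios, items $\mathcal{I}$, each item $i$ with size $s_i$ and type $\mathcal{K}_i\subseteq\{1,\dots,d\}$, and bins of capacity $1$; $S_k=\{i:k\in\mathcal{K}_i\}$. A packing is a partition $\mathcal{P}$ of (a set of) items with $\sum_{i\in B\cap S_k}s_i\le1$ for all $B\in\mathcal{P}$ and all $k$; its value is $\mathrm{val}_{BPPS}(\mathcal{P})=\max_k|\{B\in\mathcal{P}:B\cap S_k\ne\emptyset\}|$; $\mathrm{OPT}(I)$ is the minimum value of a packing of all items. $\mathcal{T}$ is the set of all types (all subsets of $\{1,\dots,d\}$). Here $\varepsilon\in(0,1/4]$ with $1/\varepsilon$ an integer, and $m=2^d/\varepsilon^3-1$. For each type $t$, $\mathcal{I}_t$ (items of type $t$) is sorted in nonincreasing order of size and partitioned into $m+1$ groups of consecutive items $G_t^0,\dots,G_t^m$, where each of the first $m$ groups has $\lceil|\mathcal{I}_t|/(m+1)\rceil$ items and the last has at most that many; so $G_t^0$ consists of the $\lceil|\mathcal{I}_t|/(m+1)\rceil$ largest items of type $t$. *)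

(* Defs.v *)
From mathcomp Require Import all_boot all_order all_algebra.
Set Implicit Arguments. Unset Strict Implicit. Unset Printing Implicit Defensive.
Import Order.TTheory GRing.Theory Num.Theory.

Section BPPS.
Variables (R : realFieldType) (d : nat) (T : finType).
Variables (s : T -> R) (K : T -> {set 'I_d}).

Definition Sk (k : 'I_d) : {set T} := [set i | k \in K i].

Definition items_of_type (t : {set 'I_d}) : {set T} := [set i | K i == t].

Definition packing (P : {set {set T}}) (A : {set T}) : Prop :=
  partition P A /\
  forall B, B \in P -> forall k : 'I_d, (\sum_(i in B :&: Sk k) s i <= 1)%R.

Definition val_bpps (P : {set {set T}}) : nat :=
  \max_(k : 'I_d) #|[set B in P | B :&: Sk k != set0]|.

End BPPS.

(* Main.v *)
Require Import Defs.
From mathcomp Require Import all_boot all_order all_algebra.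
From mathcomp Require Import ring lra.
Import Order.TTheory GRing.Theory Num.Theory.
Local Open Scope ring_scope.

Lemma card_sets_ord d : #|{set 'I_d}| = (2 ^ d)%N.
Proof. by rewrite -cardsT -powersetT card_powerset cardsT card_ord. Qed.

Lemma card_by_types d (T : finType) (K : T -> {set 'I_d}) (A : {set T}) :
  #|A| = (\sum_(t : {set 'I_d}) #|A :&: items_of_type K t|)%N.
Proof.
rewrite -sum1_card (partition_big (fun i => K i) predT) //.
apply: eq_bigr => t _; rewrite -sum1_card; apply: eq_bigl => i.
by rewrite !inE.
Qed.

Lemma count_bound d (T : finType) (K : T -> {set 'I_d}) (k : nat)
  (G0 : {set 'I_d} -> {set T})
  (hG0sub : forall t, G0 t \subset items_of_type K t)
  (hG0card : forall t, (#|G0 t| =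
      (#|items_of_type K t| + (2 ^ d * k ^ 3).-1) %/ (2 ^ d * k ^ 3))%N)
  (j : 'I_d) :
  (#|[set B in [set [set i] | i in \bigcup_(t : {set 'I_d}) G0 t] | B :&: Sk K j != set0]|
     * (2 ^ d * k ^ 3) <= #|Sk K j| + (2 ^ d * k ^ 3) * 2 ^ d)%N.
Proof.
set U := \bigcup_(t : {set 'I_d}) G0 t.
set M := (2 ^ d * k ^ 3)%N.
have -> : [set B in [set [set i] | i in U] | B :&: Sk K j != set0]
        = [set [set i] | i in U :&: Sk K j].
  apply/setP => B; rewrite inE; apply/andP/imsetP.
    case=> /imsetP [i iU ->] ne; exists i => //.
    rewrite inE iU /=; apply: contraNT ne => iS.
    apply/eqP/setP => x; rewrite !inE; apply/negbTE/andP => [[/eqP -> ]].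
    move=> h; by move: iS; rewrite inE h.
  case=> i; rewrite inE => /andP [iU iS] ->; split; first exact: imset_f.
  apply/set0Pn; exists i; by rewrite in_setI in_set1 eqxx iS.
rewrite card_imset; last exact: set1_inj.
rewrite (card_by_types _ _ K (U :&: _)) (card_by_types _ _ K (Sk K j)).
idtac.
rewrite big_distrl /= -card_sets_ord mulnC -sum_nat_const -big_split /=.
apply: leq_sum => t _.
case: (boolP (j \in t)) => jt; last first.
  have -> : U :&: Sk K j :&: items_of_type K t = set0.
    apply/setP => x; rewrite !inE; apply/negbTE; apply/andP => [[/andP [_ h] /eqP e]].
    by move: jt; rewrite -e h.
  by rewrite cards0.
have e1 : Sk K j :&: items_of_type K t = items_of_type K t.
  apply/setIidPr/subsetP => x; rewrite !inE => /eqP ->; exact: jt.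
have s1 : U :&: Sk K j :&: items_of_type K t \subset G0 t.
  apply/subsetP => x; rewrite !inE => /andP [/andP [/bigcupP [t' _ xt'] _] /eqP e].
  have := subsetP (hG0sub t') x xt'; rewrite inE => /eqP e'.
  by move: xt'; rewrite -e' e.
rewrite e1; apply: leq_trans (leq_mul (subset_leq_card s1) (leqnn M)) _.
rewrite hG0card; apply: leq_trans (leq_divM _ _) _.
rewrite leq_add2l; exact: leq_pred.
Qed.

Lemma size_bound (R : realFieldType) d (T : finType) (s : T -> R)
  (K : T -> {set 'I_d}) (Popt : {set {set T}})
  (hPopt : packing s K Popt [set: T]) (j : 'I_d) :
  \sum_(i in Sk K j) s i <= (val_bpps K Popt)%:R.
Proof.
case: hPopt => /and3P [/eqP cov triv _] cap.
rewrite big_mkcond /=.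
have -> : \sum_i (if i \in Sk K j then s i else 0)
        = \sum_(i in cover Popt) (if i \in Sk K j then s i else 0).
  by rewrite cov; apply: eq_bigl => i; rewrite inE.
rewrite big_trivIset //=.
apply: le_trans (_ : \sum_(B in [set B in Popt | B :&: Sk K j != set0]) 1 <= _).
  rewrite big_mkcond [X in _ <= X]big_mkcond /=.
  apply: ler_sum => B _; rewrite inE; case: (boolP (B \in Popt)) => BP //=.
  have e : \sum_(x in B) (if x \in Sk K j then s x else 0) = \sum_(x in B :&: Sk K j) s x.
    by rewrite -big_mkcondr; apply: eq_bigl => x; rewrite !inE.
  rewrite e; case: eqP => [-> | _]; first by rewrite big_set0.
  exact: cap.
rewrite sumr_const ler_nat.
exact: (leq_bigmax j).
Qed.

Theorem lemma5 (R : realFieldType) (d : nat) (T : finType)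
  (s : T -> R) (K : T -> {set 'I_d}) (k : nat) (hk : (4 <= k)%N)
  (hsize : forall i : T, (k%:R^-1) ^+ 2 <= s i)
  (G0 : {set 'I_d} -> {set T})
  (hG0sub : forall t, G0 t \subset items_of_type K t)
  (hG0card : forall t, (#|G0 t| =
      (#|items_of_type K t| + (2 ^ d * k ^ 3).-1) %/ (2 ^ d * k ^ 3))%N)
  (hG0large : forall t i j, i \in G0 t ->
      j \in items_of_type K t :\: G0 t -> s j <= s i)
  (Popt : {set {set T}})
  (hPopt : packing s K Popt [set: T])
  (hopt : forall P, packing s K P [set: T] -> (val_bpps K Popt <= val_bpps K P)%N) :
  (val_bpps K [set [set i] | i in \bigcup_(t : {set 'I_d}) G0 t])%:R
    <= (k%:R^-1 * (val_bpps K Popt)%:R + (2 ^ d)%:R :> R).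
Proof.
set V := val_bpps K Popt.
set x : R := k%:R.
set p : R := (2 ^ d)%:R.
have x0 : 0 < x by rewrite ltr0n; apply: leq_trans hk.
have p1 : 1 <= p by rewrite ler1n expn_gt0.
have v0 : 0 <= V%:R :> R by [].
have rhs0 : 0 <= x^-1 * V%:R + p.
  by rewrite addr_ge0 // ?mulr_ge0 // ?invr_ge0 ?ltW // (le_trans ler01 p1).
rewrite /val_bpps.
apply: (big_ind (fun n : nat => n%:R <= x^-1 * V%:R + p)) => //.
  move=> a b ha hb; rewrite /maxn; by case: ifP.
move=> j _.
set N := #|_|.
have hc := @count_bound d T K k G0 hG0sub hG0card j.
rewrite -/N in hc.
have hs := @size_bound R d T s K Popt hPopt j.
have hs' : (#|Sk K j|)%:R * (x^-1)^+2 <= V%:R.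
  apply: le_trans hs; rewrite mulrC mulr_natr -sumr_const; apply: ler_sum => i _; exact: hsize.
have hc' : N%:R * (p * x^+3) <= (#|Sk K j|)%:R + (p * x^+3) * p.
  by move: hc; rewrite -(ler_nat R) natrD !natrM /p /x !exprS expr0 !mulr1.
have hc2 : (#|Sk K j|)%:R <= V%:R * x^+2.
  have := ler_wpM2r (exprn_ge0 2 (ltW x0)) hs'.
  have -> : (#|Sk K j|)%:R * (x^-1)^+2 * x^+2 = (#|Sk K j|)%:R :> R.
    by field; rewrite gt_eqF.
  by [].
have px0 : 0 < p * x^+3 by rewrite mulr_gt0 // ?exprn_gt0 // (lt_le_trans ltr01 p1).
rewrite -(ler_pM2r px0).
have -> : (x^-1 * V%:R + p) * (p * x^+3) = p * (V%:R * x^+2) + p * (p * x^+3).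
  by field; rewrite gt_eqF.
have : V%:R * x^+2 <= p * (V%:R * x^+2) :> R.
  by rewrite ler_peMl // mulr_ge0 // exprn_ge0 // ltW.
lra.
Qed.
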